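(* Let $n,m$ be positive integers with $m$ even. If $n$ and $m$ are sufficiently large, then the zero-error (Las Vegas) randomized query complexity of $g_{n,m}$ satisfies $R_0(g_{n,m})=\Omega(nm)$.
   Context: Let $n,m$ be positive integers with $m$ even, $M=[n]\times[m]$ (a grid of cells with $n$ rows and $m$ columns), $\tilde M = M\cup\{\bot\}$ (pointers to cells, $\bot$ is the null pointer). Let $T$ be the following fixed binary tree with $m$ leaves and $m-1$ internal nodes: if $m=2^k$, $T$ is the complete binary tree with $2^k$ leaves; if $2^k<m<2^{k+1}$, take the complete binary tree with $2^k$ leaves and add a pair of children to each of its $m-2^k$ leftmost leaves. Outgoing arcs of internal nodes are labeled 'left' and 'right', leaves are labeled $1,\dots,m$ from left to right, and $T(j)$ is the sequence of 'left'/'right' labels on the root-to-leaf-$j$ path. The input alphabet is $\Sigma=\{0,1\}\times\tilde M\times\tilde M\times\tilde M$; for $v\in\Sigma$ its components are $\mathrm{val}(v),\mathrm{lpoint}(v),\mathrm{rpoint}(v),\mathrm{bpoint}(v)$. The function $g_{n,m}\colon\Sigma^M\to\{0,1\}$ is defined by $g_{n,m}(x)=1$ iff: (1) there is exactly one column $b\in[m]$ with $\mathrm{val}(x_{i,b})=1$ for all $i\in[n]$ (the marked column); (2) in column $b$ there is a unique cell $a$ with $x_a\ne(1,\bot,\bot,\bot)$ (the special element); (3) for each column $j\in[m]\setminus\{b\}$, the path starting at $a$ and following $\mathrm{lpoint},\mathrm{rpoint}$ as specified by $T(j)$ exists (no pointer on it is $\bot$) and ends in a cell $\ell_j$ in column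 $j$ with $\mathrm{val}(x_{\ell_j})=0$; (4') the set $G=\{j\in[m]\setminus\{b\} : \mathrm{bpoint}(x_{\ell_j})=a\}$ has size exactly $m/2$. A query asks for the value $x_c\in\Sigma$ of one cell $c\in M$. $R_0(f)$ is the minimum, over randomized decision trees (distributions over deterministic decision trees) all of whose trees in the support compute $f$, of the maximum over inputs of the expected number of queries. *)

(* Defs.v *)
From HB Require Import structures.
From mathcomp Require Import all_boot all_order all_algebra.
From mathcomp Require Import reals.
From Stdlib Require List.
Set Implicit Arguments. Unset Strict Implicit. Unset Printing Implicit Defensive.
Import Order.TTheory GRing.Theory Num.Theory.

Inductive btree := BLeaf | BNode of btree & btree.

Fixpoint complete_tree (k : nat) : btree :=
  if k is k'.+1 then BNode (complete_tree k') (complete_tree k') else BLeaf.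

(* add a pair of children to each of the r leftmost leaves; returns the new
   tree and the number of splits still to perform *)
Fixpoint split_left (r : nat) (t : btree) : btree * nat :=
  match t with
  | BLeaf => if r is r'.+1 then (BNode BLeaf BLeaf, r') else (BLeaf, 0)
  | BNode l rt =>
      let (l', r1) := split_left r l in
      let (rt', r2) := split_left r1 rt in (BNode l' rt', r2)
  end.

(* T for m leaves: with k = floor(log2 m), the complete tree with 2^k leaves
   where the m - 2^k leftmost leaves get two children *)
Definition Ttree (m : nat) : btree :=
  let k := trunc_log 2 m in (split_left (m - 2 ^ k) (complete_tree k)).1.

(* root-to-leaf label sequences, leaves listed from left to right;
   false = 'left', true = 'right' *)
Fixpoint leaf_paths (t : btree) : seq (seq bool) :=
  match t with
  | BLeaf => [:: [::]]
  | BNode l r => map (cons false) (leaf_paths l) ++ map (cons true) (leaf_paths r)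
  end.

(* T(j) for the column j : 'I_m (0-indexed column j is leaf j+1) *)
Definition Tpath (m : nat) (j : nat) : seq bool := nth [::] (leaf_paths (Ttree m)) j.

Definition cell (n m : nat) : finType := ('I_n * 'I_m)%type.
Definition Sigma (n m : nat) : finType :=
  (bool * option (cell n m) * option (cell n m) * option (cell n m))%type.
Definition input (n m : nat) : finType := {ffun cell n m -> Sigma n m}.

Section Components.
Variables n m : nat.
Definition sval (v : Sigma n m) : bool := v.1.1.1.
Definition lpoint (v : Sigma n m) : option (cell n m) := v.1.1.2.
Definition rpoint (v : Sigma n m) : option (cell n m) := v.1.2.
Definition bpoint (v : Sigma n m) : option (cell n m) := v.2.
Definition trivial_entry : Sigma n m := (true, None, None, None).

(* follow lpoint/rpoint according to a label sequence; None if some pointer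
   on the path is the null pointer *)
Fixpoint follow (x : input n m) (c : option (cell n m)) (p : seq bool)
  : option (cell n m) :=
  match p with
  | [::] => c
  | d :: p' =>
      match c with
      | None => None
      | Some c0 => follow x (if d then rpoint (x c0) else lpoint (x c0)) p'
      end
  end.

Definition marked (x : input n m) (b : 'I_m) : bool := [forall i, sval (x (i, b))].

(* ell_j : the end of the T(j)-path from the special element a *)
Definition ell (x : input n m) (a : cell n m) (j : 'I_m) : option (cell n m) :=
  follow x (Some a) (Tpath m j).

Definition path_ok (x : input n m) (a : cell n m) (j : 'I_m) : bool :=
  if ell x a j is Some l then (l.2 == j) && ~~ sval (x l) else false.

Definition Gset (x : input n m) (a : cell n m) (b : 'I_m) : {set 'I_m} :=
  [set j | (j != b) &&
     (if ell x a j is Some l then bpoint (x l) == Some a else false)].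

Definition g (x : input n m) : bool :=
  [exists b : 'I_m, [exists a : 'I_n,
    [&& marked x b,
        [forall b' : 'I_m, marked x b' ==> (b' == b)],
        x (a, b) != trivial_entry,
        [forall i : 'I_n, (i != a) ==> (x (i, b) == trivial_entry)],
        [forall j : 'I_m, (j != b) ==> path_ok x (a, b) j]
      & #|Gset x (a, b) b| == m./2]]].
End Components.

Inductive dtree (I A : Type) :=
  | DLeaf of bool
  | DQuery of I & (A -> dtree I A).
Arguments DLeaf {I A}.
Arguments DQuery {I A}.

Fixpoint dt_eval (I A : Type) (t : dtree I A) (x : I -> A) : bool :=
  match t with
  | DLeaf b => b
  | DQuery c k => dt_eval (k (x c)) x
  end.

Fixpoint dt_cost (I A : Type) (t : dtree I A) (x : I -> A) : nat :=
  match t with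
  | DLeaf _ => 0
  | DQuery c k => (dt_cost (k (x c)) x).+1
  end.

Local Open Scope ring_scope.

(* randomized decision tree: a (finitely supported) probability distribution
   over deterministic decision trees *)
Record rdtree (R : realType) (I A : Type) := RDTree {
  rdt_supp : seq (R * dtree I A);
  rdt_nonneg : forall p, List.In p rdt_supp -> 0 <= p.1;
  rdt_sum1 : \sum_(p <- rdt_supp) p.1 = 1 }.

Definition zero_error (R : realType) (I : finType) (A : finType)
  (D : rdtree R I A) (f : {ffun I -> A} -> bool) : Prop :=
  forall p, List.In p (rdt_supp D) -> 0 < p.1 ->
    forall x : {ffun I -> A}, dt_eval p.2 x = f x.

Definition expected_cost (R : realType) (I : finType) (A : finType)
  (D : rdtree R I A) (x : {ffun I -> A}) : R :=
  \sum_(p <- rdt_supp D) p.1 * (dt_cost p.2 x)%:R.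

(* Main.v *)
Require Import Defs.
From HB Require Import structures.
From mathcomp Require Import all_boot all_order all_algebra.
From mathcomp Require Import reals zify ring.
Import Order.TTheory GRing.Theory Num.Theory.
Set Implicit Arguments. Unset Strict Implicit. Unset Printing Implicit Defensive.

Lemma split_left_nl r t :
  size (leaf_paths (split_left r t).1) = size (leaf_paths t) + minn r (size (leaf_paths t))
  /\ (split_left r t).2 = r - minn r (size (leaf_paths t)).
Proof.
elim: t r => [|l IHl rt IHr] r /=.
  by case: r => [|r] /=; split => //; lia.
move: (IHl r); case: (split_left r l) => l' r1 /= [H1 H2].
move: (IHr r1); case: (split_left r1 rt) => rt' r2 /= [H3 H4].
rewrite !size_cat !size_map H1 H3 H4 H2; split; lia.
Qed.

Lemma complete_paths k :
  size (leaf_paths (complete_tree k)) = 2 ^ k /\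
  all (fun p => size p == k) (leaf_paths (complete_tree k)).
Proof.
elim: k => [|k [IH1 IH2]] //=.
rewrite size_cat !size_map IH1 expnS mul2n addnn; split => //.
rewrite all_cat !all_map; apply/andP; split; apply/allP => p Hp /=;
by rewrite eqSS; move/allP: IH2 => /(_ p Hp).
Qed.

Lemma lp_ne t : leaf_paths t != [::].
Proof. by elim: t => [|l IHl r IHr] //=; case: (leaf_paths l) IHl. Qed.

Lemma split_left_depth r t h :
  all (fun p => size p <= h) (leaf_paths t) ->
  all (fun p => size p <= h.+1) (leaf_paths (split_left r t).1).
Proof.
elim: t r h => [|l IHl rt IHr] r h /=.
  by move=> _; case: r.
case: h => [|h].
  move=> H; rewrite all_cat all_map in H; move/andP: H => [H _].
  by move: H (lp_ne l); case: (leaf_paths l).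
move=> H; rewrite all_cat !all_map in H; move/andP: H => [H1 H2].
have H1' : all (fun p => size p <= h) (leaf_paths l).
  by apply/allP => p Hp; move/allP: H1 => /(_ p Hp).
have H2' : all (fun p => size p <= h) (leaf_paths rt).
  by apply/allP => p Hp; move/allP: H2 => /(_ p Hp).
move: (IHl r h H1'); case: (split_left r l) => l' r1 /= H3.
move: (IHr r1 h H2'); case: (split_left r1 rt) => rt' r2 /= H4.
rewrite all_cat !all_map; apply/andP; split; apply/allP => p Hp /=.
  by move/allP: H3 => /(_ p Hp).
by move/allP: H4 => /(_ p Hp).
Qed.

Lemma lp_uniq t : uniq (leaf_paths t).
Proof.
elim: t => [|l IHl r IHr] //=.
rewrite cat_uniq !map_inj_uniq //; try by move=> ? ? [].
rewrite IHl IHr /= andbT; apply/hasPn => p /mapP [q _ ->].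
by apply/mapP => [[q' _]].
Qed.

Lemma lp_prefix t p q : p \in leaf_paths t -> q \in leaf_paths t ->
  take (size q) p = q -> q = p.
Proof.
elim: t p q => [|l IHl r IHr] p q /=.
  by rewrite !inE => /eqP -> /eqP ->.
rewrite !mem_cat => /orP [] /mapP [p' Hp' ->] /orP [] /mapP [q' Hq' ->] /= [] //.
- by move=> H; rewrite (IHl _ _ Hp' Hq' H).
- by move=> H; rewrite (IHr _ _ Hp' Hq' H).
Qed.

Definition code (u : seq bool) : nat := foldl (fun a (b : bool) => a.*2 + b) 1 u.

Lemma code_rcons u d : code (rcons u d) = (code u).*2 + d.
Proof. by rewrite /code foldl_rcons. Qed.

Lemma code_nil : code [::] = 1. Proof. by []. Qed.

Lemma code_pos u : 0 < code u.
Proof.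
elim/last_ind: u => [|u d IH] //; rewrite code_rcons; lia.
Qed.

Lemma code_lt u : code u < 2 ^ (size u).+1.
Proof.
elim/last_ind: u => [|u d IH] //; rewrite code_rcons size_rcons expnS; case: d => /=; lia.
Qed.

Lemma code_inj : injective code.
Proof.
move=> u; elim/last_ind: u => [|u d IH] v; case/lastP: v => [|v e] //.
- rewrite code_rcons code_nil => H; exfalso; move: (code_pos v) H; case: e => /=; lia.
- rewrite code_rcons code_nil => H; exfalso; move: (code_pos u) H; case: d => /=; lia.
rewrite !code_rcons => E.
have Hd : d = e by case: d e E => [] [] //; lia.
subst e; congr rcons; apply: IH; case: d E => /=; lia.
Qed.

Lemma Ttree_size m : 0 < m -> size (leaf_paths (Ttree m)) = m.
Proof.
move=> Hm; rewrite /Ttree.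
have H1 := trunc_logP (isT : 1 < 2) Hm.
have H2 := trunc_log_ltn m (isT : 1 < 2).
move: H1 H2; set k := trunc_log 2 m => H1 H2.
have [-> _] := split_left_nl (m - 2 ^ k) (complete_tree k).
have [-> _] := complete_paths k.
rewrite expnS in H2; lia.
Qed.

Lemma Ttree_depth m p : 0 < m -> p \in leaf_paths (Ttree m) ->
  2 ^ size p <= 2 * m.
Proof.
move=> Hm Hp; rewrite /Ttree in Hp.
have H1 := trunc_logP (isT : 1 < 2) Hm.
move: H1 Hp; set k := trunc_log 2 m => H1 Hp.
have [_ H] := complete_paths k.
have H' : all (fun p => size p <= k) (leaf_paths (complete_tree k)).
  by apply/allP => q Hq; move/allP: H => /(_ q Hq) /eqP ->.
move/allP: (split_left_depth (m - 2 ^ k) H') => /(_ p Hp) Hs.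
apply: (leq_trans (leq_pexp2l (isT : 0 < 2) Hs)).
by rewrite expnS leq_mul2l.
Qed.

Fixpoint qs (I : eqType) (A : Type) (t : dtree I A) (x : I -> A) : seq I :=
  match t with DLeaf _ => [::] | DQuery c k => c :: qs (k (x c)) x end.

Lemma cost_qs (I : eqType) A (t : dtree I A) x : dt_cost t x = size (qs t x).
Proof. by elim: t => [b|c k IH] //=; rewrite IH. Qed.

Lemma agree_eval (I : eqType) A (t : dtree I A) (x y : I -> A) :
  (forall c, c \in qs t x -> y c = x c) -> dt_eval t y = dt_eval t x.
Proof.
elim: t => [b|c k IH] //= H.
rewrite H ?mem_head //; apply: IH => d Hd; apply: H; by rewrite inE Hd orbT.
Qed.

Lemma differ_at (I : eqType) A (t : dtree I A) (x y : I -> A) (c : I) :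
  (forall d, d != c -> x d = y d) ->
  [/\ index c (qs t x) = index c (qs t y),
      take (index c (qs t x)) (qs t x) = take (index c (qs t y)) (qs t y)
    & (c \in qs t x) = (c \in qs t y)].
Proof.
move=> H; elim: t => [b|d k IH] //=.
case: (eqVneq d c) => [->|Hdc]; first by rewrite /= ?eqxx ?inE ?eqxx.
rewrite (H d Hdc); case: (IH (y d)) => [H1 H2 H3].
by rewrite /= H2 H1 !inE H3.
Qed.

Lemma idx_filter (T : eqType) (p : pred T) (c : T) (l : seq T) :
  p c -> index c (filter p l) = count p (take (index c l) l).
Proof.
move=> Hc; elim: l => [|d l IH] //=.
case: (eqVneq d c) => [->|Hdc]; first by rewrite Hc /= eqxx.
rewrite /=; case: (p d) => /=; rewrite ?(negbTE Hdc) /= ?IH //.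
Qed.

Lemma mem_take_idx (T : eqType) (c : T) (s : seq T) L :
  c \in s -> index c s < L -> c \in take L s.
Proof.
move=> Hc HL; rewrite -(nth_index c Hc) -(nth_take c HL).
by apply: mem_nth; rewrite size_take; case: ifP => // _; rewrite index_mem.
Qed.
Lemma follow_cat n m (x : input n m) c u v :
  follow x c (u ++ v) = follow x (follow x c u) v.
Proof.
elim: u c => [|d u IH] c; first by [].
case: c => [c0|]; first by rewrite /= IH.
by clear IH; case: v.
Qed.

Lemma follow_rcons n m (x : input n m) c u d :
  follow x c (rcons u d) =
  if follow x c u is Some c0 then (if d then rpoint (x c0) else lpoint (x c0)) else None.
Proof.
by rewrite -cats1 follow_cat; case: (follow x c u) => [c0|] //=; case: d => //=; case: (_ (x c0)).
Qed.

Definition zeroE n m : Sigma n m := (false, None, None, None).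

Definition xo n m (zo : {ffun 'I_m -> option 'I_n}) : input n m :=
  [ffun c : cell n m => if zo c.2 == Some c.1 then zeroE n m else trivial_entry n m].

Definition xz n m (z : {ffun 'I_m -> 'I_n}) : input n m := xo [ffun j => Some (z j)].

Lemma xzE n m (z : {ffun 'I_m -> 'I_n}) (c : cell n m) :
  xz z c = if z c.2 == c.1 then zeroE n m else trivial_entry n m.
Proof. by rewrite /xz /xo !ffunE. Qed.

Lemma g_xz n m (z : {ffun 'I_m -> 'I_n}) : g (xz z) = false.
Proof.
apply/negbTE; apply/existsPn => b; apply/existsPn => a.
apply/negP => /andP [Hmk _].
by move/forallP: Hmk => /(_ (z b)); rewrite xzE /= eqxx.
Qed.

Section LemmaA.
Variables (n m : nat) (t : dtree (cell n m) (Sigma n m)) (z : {ffun 'I_m -> 'I_n}) (j : 'I_m).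
Hypothesis Hn : 8 <= n.
Hypothesis Hm : 8 <= m.
Let xx := xz z.
Let S := qs t xx.
Let a : cell n m := (z j, j).
Hypothesis Ha : a \notin S.
Hypothesis HS : size S < m * (n %/ 8).

Let Colset := [set j' : 'I_m | (j' != j) && [exists i, (i, j') \notin S]].
Let Gcols := take m./2 (enum Colset).
Let pickrow (j' : 'I_m) : 'I_n := odflt (z j') [pick i | (i, j') \notin S].
Let tgt (j' : 'I_m) : cell n m := if j' \in Gcols then (pickrow j', j') else (z j', j').
Let tgtn (k : nat) : cell n m := if insub k is Some j' then tgt j' else a.
Let Gtargets := [seq (pickrow j', j') | j' <- Gcols].
Let Tset := [set tgt j' | j' : 'I_m].
Let SupSet := [set c : cell n m | [&& c.2 != j, c \notin S & c \notin Tset]].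
Let Supply := take (4 * m) (enum SupSet).
Let paths := leaf_paths (Ttree m).
Let lcodes := map code paths.
Let psi (M : nat) : cell n m :=
  if M \in lcodes then tgtn (index M lcodes) else nth a Supply M.
Let y : input n m := [ffun c : cell n m =>
  if c == a then (true, Some (psi 2), Some (psi 3), None)
  else if c \in Supply then
     (false, Some (psi (index c Supply).*2), Some (psi (index c Supply).*2.+1), None)
  else if c \in Gtargets then (false, None, None, Some a)
  else xx c].

Lemma q_facts : 0 < n %/ 8 /\ n %/ 8 * 8 <= n.
Proof. split; [by rewrite divn_gt0 | exact: leq_divM]. Qed.

Lemma Colset_big : m./2 <= #|Colset|.
Proof.
set Full := [set j' : 'I_m | [forall i, (i, j') \in S]].
have H1 : #|Full| * n <= size S.
  have Hsub : setX [set: 'I_n] Full \subset [set c | c \in S].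
    apply/subsetP => c; rewrite !inE /= => /forallP /(_ c.1).
    by rewrite -surjective_pairing.
  move: (subset_leq_card Hsub); rewrite cardsX cardsT card_ord cardsE => H.
  rewrite mulnC; apply: (leq_trans H).
  rewrite cardsE; exact: card_size.
have H2 : [set~ j] :\: Full \subset Colset.
  apply/subsetP => j'; rewrite !inE => /andP [HF Hj]; rewrite Hj /=.
  by rewrite negb_forall in HF.
have H3 := subset_leq_card H2.
rewrite cardsD cardsC1 card_ord in H3.
have H4 : #|[set~ j] :&: Full| <= #|Full| by apply: subset_leq_card; apply: subsetIr.
have [Hq1 Hq2] := q_facts.
have H5 : #|Full| * 8 < m.
  have H6 : #|Full| * n < m * (n %/ 8) by apply: leq_ltn_trans H1 HS.
  have H7 : #|Full| * (n %/ 8 * 8) <= #|Full| * n by rewrite leq_mul2l Hq2 orbT.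
  nia.
lia.
Qed.

Lemma SupSet_big : 4 * m <= #|SupSet|.
Proof.
have H2 : ([set c : cell n m | c.2 != j] :\: [set c | c \in S]) :\: Tset \subset SupSet.
  apply/subsetP => c; rewrite !inE => /andP [HT /andP [HS' Hc]].
  by rewrite Hc HS' HT.
have H3 := subset_leq_card H2.
rewrite cardsD in H3.
have H4 : #|([set c : cell n m | c.2 != j] :\: [set c | c \in S]) :&: Tset| <= m.
  apply: (leq_trans (subset_leq_card (subsetIr _ _))).
  by apply: (leq_trans (leq_imset_card _ _)); rewrite card_ord.
have H5 : [set c : cell n m | c.2 != j] = setX [set: 'I_n] [set~ j].
  by apply/setP => c; rewrite !inE.
rewrite cardsD H5 cardsX cardsT cardsC1 !card_ord in H3.
have H6 : #|setX [set: 'I_n] [set~ j] :&: [set c | c \in S]| <= size S.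
  apply: (leq_trans (subset_leq_card (subsetIr _ _))).
  by rewrite cardsE; apply: card_size.
have [Hq1 Hq2] := q_facts.
have H7 : size S * 8 < m * n.
  apply: (leq_trans (n := (m * (n %/ 8)) * 8)); first by rewrite ltn_pmul2r.
  by rewrite -mulnA leq_mul2l Hq2 orbT.
rewrite H5 in H4.
have A1 : n * 8 <= n * m by rewrite leq_mul2l Hm orbT.
have A2 : 8 * m <= n * m by rewrite leq_mul2r Hn orbT.
rewrite -subn1 mulnBr muln1 in H3.
rewrite [m * n]mulnC in H7.
move: A1 A2 H3 H7 H4 H6; move: (n * m) => P.
move: (#|_ :&: [set c in S]|) => X.
move: (#|_ :&: Tset|) => Y.
lia.
Qed.

Lemma size_Gcols : size Gcols = m./2.
Proof. by rewrite size_take -cardE; move: Colset_big; case: ltnP; lia. Qed.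

Lemma size_Supply : size Supply = 4 * m.
Proof. by rewrite size_take -cardE; move: SupSet_big; case: ltnP; lia. Qed.

Lemma Gcols_Colset j' : j' \in Gcols -> j' \in Colset.
Proof. by move/mem_take; rewrite mem_enum. Qed.

Lemma Supply_SupSet c : c \in Supply -> c \in SupSet.
Proof. by move/mem_take; rewrite mem_enum. Qed.

Lemma pickrowP j' : j' \in Gcols -> (pickrow j', j') \notin S.
Proof.
move/Gcols_Colset; rewrite inE => /andP [_ /existsP [i Hi]].
rewrite /pickrow; case: pickP => [i' //|/(_ i)]; by rewrite Hi.
Qed.

Lemma agreeSy c : c \in S -> y c = xx c.
Proof.
move=> Hc; rewrite /y ffunE.
have -> : (c == a) = false by apply/negbTE; apply: contraNneq Ha => <-.
have -> : (c \in Supply) = false.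
  apply/negbTE/negP => /Supply_SupSet; rewrite inE Hc /=; by rewrite andbF.
have -> : (c \in Gtargets) = false.
  apply/negbTE/negP => /mapP [j' Hj' E]; move: (pickrowP Hj'); by rewrite -E Hc.
by [].
Qed.

Lemma tgt_col j' : (tgt j').2 = j'.
Proof. by rewrite /tgt; case: ifP. Qed.

Lemma tgt_Tset j' : tgt j' \in Tset.
Proof. by apply/imsetP; exists j'. Qed.

Lemma Supply_col c : c \in Supply -> c.2 != j.
Proof. by move/Supply_SupSet; rewrite inE => /and3P []. Qed.

Lemma Supply_notT c : c \in Supply -> c \notin Tset.
Proof. by move/Supply_SupSet; rewrite inE => /and3P []. Qed.

Lemma Gcols_neq j' : j' \in Gcols -> j' != j.
Proof. by move/Gcols_Colset; rewrite inE => /andP []. Qed.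

Lemma Gtargets_col c : c \in Gtargets -> c.2 \in Gcols.
Proof. by move/mapP => [j' Hj' ->]. Qed.

Lemma y_tgt j' : j' != j ->
  y (tgt j') = if j' \in Gcols then (false, None, None, Some a) else zeroE n m.
Proof.
move=> Hj; rewrite /y ffunE.
have -> : (tgt j' == a) = false.
  apply/negbTE; apply/negP => /eqP E; move: (tgt_col j'); rewrite E /= => E2.
  by rewrite E2 eqxx in Hj.
have -> : (tgt j' \in Supply) = false.
  by apply/negbTE/negP => /Supply_notT; rewrite tgt_Tset.
case: (boolP (j' \in Gcols)) => HG.
  have HT : tgt j' \in Gtargets.
    rewrite /tgt HG /Gtargets; exact: (map_f (fun k => (pickrow k, k))).
  by rewrite HT.
have -> : (tgt j' \in Gtargets) = false.
  by apply/negbTE/negP => /Gtargets_col; rewrite tgt_col (negbTE HG).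
by rewrite /tgt (negbTE HG) /xx xzE /= eqxx.
Qed.

Lemma y_colj i : y (i, j) =
  if i == z j then (true, Some (psi 2), Some (psi 3), None) else trivial_entry n m.
Proof.
rewrite /y ffunE /a xpair_eqE eqxx andbT.
case: ifP => // Hi.
have -> : ((i, j) \in Supply) = false.
  by apply/negbTE/negP => /Supply_col; rewrite eqxx.
have -> : ((i, j) \in Gtargets) = false.
  by apply/negbTE/negP => /Gtargets_col /Gcols_neq; rewrite eqxx.
by rewrite /xx xzE /= eq_sym Hi.
Qed.

Lemma paths_size : size paths = m.
Proof. by apply: Ttree_size; lia. Qed.

Lemma ell_y j' : j' != j -> ell y a j' = Some (tgt j').
Proof.
move=> Hj; rewrite /ell /Tpath -/paths.
set p := nth [::] paths j'.
have Hp : p \in paths by apply: mem_nth; rewrite paths_size.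
have Hpos : 0 < size p.
  case: (posnP (size p)) => // /size0nil Ep.
  have H0 : forall q, q \in paths -> q = [::].
    by move=> q Hq; have := lp_prefix Hq Hp; rewrite Ep take0 => /(_ erefl) ->.
  have := lp_uniq (Ttree m); rewrite -/paths.
  have Hs := paths_size.
  have E0 : nth [::] paths 0 = [::].
    by apply: H0; apply: mem_nth; rewrite Hs; apply: leq_trans Hm.
  have E1 : nth [::] paths 1 = [::].
    by apply: H0; apply: mem_nth; rewrite Hs; apply: leq_trans Hm.
  have Hs0 : 0 < size paths by rewrite Hs; apply: leq_trans Hm.
  have Hs1 : 1 < size paths by rewrite Hs; apply: leq_trans Hm.
  move=> Hu; have := nth_uniq [::] Hs0 Hs1 Hu.
  by rewrite E0 E1 eqxx.
have Hdep := Ttree_depth (ltac:(lia) : 0 < m) Hp.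
have key : forall i, 0 < i -> i <= size p ->
    follow y (Some a) (take i p) = Some (psi (code (take i p))).
  elim => [|i IH] // _ Hi.
  case: (posnP i) => [Ei|Hi0].
    subst i; rewrite (take_nth false) ?take0 //=.
    rewrite /y ffunE eqxx /=.
    by case: (nth false p 0).
  rewrite (take_nth false Hi) follow_rcons IH //; last by lia.
  set u := take i p.
  have Hsu : size u = i by rewrite size_take; case: ifP => //; lia.
  have Hu : u \notin paths.
    apply/negP => Hu; move: (lp_prefix Hp Hu) => /(_ _).
    rewrite Hsu /u => /(_ erefl) E.
    by move: (congr1 size E); rewrite -/u Hsu => Ei; rewrite Ei ltnn in Hi.
  have Hcu : code u \notin lcodes.
    by apply/negP => /mapP [q Hq /code_inj E]; rewrite E Hq in Hu.
  rewrite /psi (negbTE Hcu).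
  have Hlt : code u < size Supply.
    rewrite size_Supply; apply: (leq_trans (code_lt u)).
    apply: (leq_trans _ (_ : 2 * m <= 4 * m)); last by lia.
    by apply: leq_trans Hdep; rewrite leq_exp2l // Hsu.
  set s0 := nth a Supply (code u).
  have Hs0 : s0 \in Supply by apply: mem_nth.
  have Hs0a : (s0 == a) = false.
    by apply/negbTE/negP => /eqP E; move: (Supply_col Hs0); rewrite E /= eqxx.
  have Hidx : index s0 Supply = code u.
    by apply: index_uniq => //; apply: take_uniq; apply: enum_uniq.
  rewrite /y ffunE Hs0a Hs0 Hidx code_rcons /=.
  by case: (nth false p i) => /=; rewrite ?addn0 ?addn1.
rewrite -{1}(take_size p) key // take_size.
have Hc : code p \in lcodes by apply: map_f.
rewrite /psi Hc /lcodes (index_map code_inj) /p index_uniq ?lp_uniq ?paths_size //.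
by rewrite /tgtn valK.
Qed.

Lemma gy : g y = true.
Proof.
apply/existsP; exists j; apply/existsP; exists (z j).
apply/andP; split.
  by apply/forallP => i; rewrite y_colj; case: ifP.
apply/andP; split.
  apply/forallP => b'; apply/implyP => Hb'; apply/negPn/negP => Hne.
  move/forallP: Hb' => /(_ (tgt b').1).
  have -> : ((tgt b').1, b') = tgt b' by rewrite -{2}(tgt_col b') -surjective_pairing.
  by rewrite y_tgt //; case: ifP.
apply/andP; split.
  by rewrite y_colj eqxx.
apply/andP; split.
  by apply/forallP => i; apply/implyP => Hi; rewrite y_colj (negbTE Hi).
apply/andP; split.
  apply/forallP => j'; apply/implyP => Hj.
  by rewrite /path_ok ell_y // tgt_col eqxx y_tgt //; case: ifP.
have -> : Gset y (z j, j) j = [set j' | j' \in Gcols].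
  apply/setP => j'; rewrite !inE.
  case: (eqVneq j' j) => [->|Hj] /=.
    by apply/esym/negbTE/negP => /Gcols_neq; rewrite eqxx.
  by rewrite ell_y // y_tgt //; case: ifP => //= _; apply: eqxx.
have Hu : uniq Gcols by apply: take_uniq; apply: enum_uniq.
apply/eqP; rewrite -size_Gcols -(card_uniqP Hu); apply: eq_card => k; by rewrite inE.
Qed.

Lemma lemmaA : (forall x : input n m, dt_eval t x = g x) -> False.
Proof.
move=> Ht; have E1 := Ht y; have E2 := Ht xx.
rewrite (agree_eval (y := y) agreeSy) E2 gy in E1.
by rewrite /xx g_xz in E1.
Qed.

End LemmaA.

Lemma sum_count_col n m (s : seq (cell n m)) :
  \sum_(j < m) count (fun c : cell n m => c.2 == j) s = size s.
Proof.
elim: s => [|c s IH] /=; first by rewrite big1.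
rewrite big_split /= IH (bigD1 c.2) //= eqxx big1 ?add1n ?addn0 //.
by move=> k Hk; rewrite eq_sym (negbTE Hk).
Qed.

Lemma count_take_le (T : Type) (p : pred T) k (s : seq T) : count p (take k s) <= count p s.
Proof. by rewrite -{2}(cat_take_drop k s) count_cat leq_addr. Qed.

Definition upd n m (z : {ffun 'I_m -> 'I_n}) (j : 'I_m) (r : 'I_n) : {ffun 'I_m -> 'I_n} :=
  [ffun k => if k == j then r else z k].

Lemma reindex_upd n m (j : 'I_m) (F : {ffun 'I_m -> 'I_n} -> nat) :
  \sum_(z : {ffun 'I_m -> 'I_n}) \sum_(r < n) F (upd z j r) =
  n * \sum_(z : {ffun 'I_m -> 'I_n}) F z.
Proof.
rewrite pair_big /=.
pose Phi (p : {ffun 'I_m -> 'I_n} * 'I_n) := (upd p.1 j p.2, p.1 j).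
have Hinv : involutive Phi.
  move=> [z r]; rewrite /Phi /upd /=; congr pair; last by rewrite ffunE eqxx.
  by apply/ffunP => k; rewrite !ffunE; case: eqP => [->|].
have E : \sum_(p : {ffun 'I_m -> 'I_n} * 'I_n) F (upd p.1 j p.2) =
         \sum_(p : {ffun 'I_m -> 'I_n} * 'I_n) F p.1.
  by rewrite [RHS](reindex_inj (inv_inj Hinv)).
rewrite E -(pair_big predT predT (fun z (r : 'I_n) => F z)) /=.
rewrite big_distrr /=.
by apply: eq_bigr => z _; rewrite sum_nat_const card_ord mulnC.
Qed.

Section Count.
Variables (n m : nat) (t : dtree (cell n m) (Sigma n m)).
Hypothesis Ht : forall x : input n m, dt_eval t x = g x.
Hypothesis Hn : 8 <= n.
Hypothesis Hm : 8 <= m.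
Let L := n %/ 8.
Let cost (z : {ffun 'I_m -> 'I_n}) := size (qs t (xz z)).
Let found (j : 'I_m) (z : {ffun 'I_m -> 'I_n}) := (z j, j) \in qs t (xz z).
Let pos (j : 'I_m) (z : {ffun 'I_m -> 'I_n}) := count (fun c : cell n m => c.2 == j)
   (take (index (z j, j) (qs t (xz z))) (qs t (xz z))).
Let h (j : 'I_m) (z : {ffun 'I_m -> 'I_n}) := if found j z then minn (pos j z) L else L.

Lemma C1 z : \sum_(j < m) h j z <= 2 * cost z.
Proof.
have E : \sum_(j < m) h j z <=
    \sum_(j < m) count (fun c : cell n m => c.2 == j) (qs t (xz z)) +
    \sum_(j < m) (if found j z then 0 else L).
  rewrite -big_split /=; apply: leq_sum => j _; rewrite /h.
  case: ifP => _; last by rewrite leq_addl.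
  by rewrite addn0; apply: (leq_trans (geq_minl _ _)); apply: count_take_le.
rewrite sum_count_col in E; apply: (leq_trans E).
case: (boolP [forall j, found j z]) => [/forallP Hall|].
  rewrite big1 ?addn0 => [|j _]; last by rewrite Hall.
  by rewrite /cost mul2n -addnn leq_addl.
rewrite negb_forall => /existsP [j Hj].
have Hc : m * L <= cost z.
  rewrite leqNgt; apply/negP => Hlt.
  exact: (lemmaA Hn Hm Hj Hlt Ht).
have : \sum_(j < m) (if found j z then 0 else L) <= m * L.
  apply: (leq_trans (n := \sum_(j < m) L)); first by apply: leq_sum => k _; case: ifP.
  by rewrite sum_nat_const card_ord.
move=> HX; rewrite /cost in Hc *; rewrite mul2n -addnn leq_add2l.
exact: leq_trans HX Hc.
Qed.

Lemma C2 z (j : 'I_m) : (n - L) * L <= \sum_(r < n) h j (upd z j r).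
Proof.
pose zo := [ffun k => if k == j then None else Some (z k)] : {ffun 'I_m -> option 'I_n}.
pose Q := qs t (xo zo).
pose w := filter (fun c : cell n m => c.2 == j) Q.
pose A := [set r : 'I_n | h j (upd z j r) < L].
have HA : forall r, r \in A -> (r, j) \in take L w.
  move=> r; rewrite inE /h /found /pos.
  have Hupd : upd z j r j = r by rewrite ffunE eqxx.
  rewrite Hupd; case: ifP; last by rewrite ltnn.
  move=> Hf Hlt.
  have Hdiff : forall d, d != (r, j) -> xz (upd z j r) d = xo zo d.
    move=> [i k] Hd; rewrite xzE /xo !ffunE /=.
    case: (eqVneq k j) => [Ekj|Hkj].
      subst k.
      have -> : (r == i) = false by apply/negbTE; apply: contraNneq Hd => ->.
      by [].
    by [].
  have [H1 H2 H3] := differ_at t Hdiff.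
  rewrite H2 -/Q in Hlt; rewrite H3 -/Q in Hf.
  have Hlt' : minn (count (fun c : cell n m => c.2 == j) (take (index (r, j) Q) Q)) L < L by [].
  have Hlt2 : count (fun c : cell n m => c.2 == j) (take (index (r, j) Q) Q) < L.
    by move: Hlt'; rewrite gtn_min ltnn orbF.
  apply: mem_take_idx; first by rewrite mem_filter /= eqxx Hf.
  by rewrite /w idx_filter //= eqxx.
have Hcard : #|A| <= L.
  have Hinj : injective (fun r : 'I_n => ((r, j) : cell n m)) by move=> r1 r2 [].
  rewrite -(card_imset _ Hinj).
  apply: (leq_trans (n := #|[set c | c \in take L w]|)).
    apply: subset_leq_card; apply/subsetP => c /imsetP [r Hr ->]; rewrite inE.
    exact: HA.
  rewrite cardsE; apply: (leq_trans (card_size _)).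
  by rewrite size_take; case: ltnP.
have Hge : \sum_(r < n) (if r \in A then 0 else L) <= \sum_(r < n) h j (upd z j r).
  apply: leq_sum => r _; case: ifP => // HrA.
  by move: HrA; rewrite inE => /negbT; rewrite -leqNgt.
apply: leq_trans Hge.
have E : \sum_(r < n | r \notin A) L = \sum_(r < n) (if r \in A then 0 else L).
  by rewrite big_mkcond; apply: eq_bigr => r _; case: (r \in A).
rewrite -E sum_nat_const leq_mul2r; apply/orP; right.
have := cardC (mem A); rewrite card_ord => HC.
have -> : #|[pred r : 'I_n | r \notin A]| = #|[predC A]| by apply: eq_card.
move: HC Hcard; move: #|A| #|[predC A]| => a b; lia.
Qed.

Hypothesis Hn16 : 16 <= n.

Lemma tree_bound :
  #|{ffun 'I_m -> 'I_n}| * (n * m) <= 64 * \sum_(z : {ffun 'I_m -> 'I_n}) cost z.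
Proof.
set C := \sum_(z : {ffun 'I_m -> 'I_n}) cost z.
set P := #|{ffun 'I_m -> 'I_n}|.
have S1 : \sum_(j < m) \sum_(z : {ffun 'I_m -> 'I_n}) h j z <= 2 * C.
  rewrite exchange_big /= /C big_distrr /=; apply: leq_sum => z _; exact: C1.
have S2 : forall j, P * ((n - L) * L) <= n * \sum_(z : {ffun 'I_m -> 'I_n}) h j z.
  move=> j; rewrite -(reindex_upd j (h j)) /P -sum_nat_const.
  by apply: leq_sum => z _; apply: C2.
have S3 : m * (P * ((n - L) * L)) <= n * (2 * C).
  apply: (leq_trans _ (leq_mul (leqnn n) S1)); rewrite big_distrr /=.
  have H : \sum_(j < m) (P * ((n - L) * L)) <=
           \sum_(j < m) n * \sum_(z : {ffun 'I_m -> 'I_n}) h j z.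
    by apply: leq_sum => j _; apply: S2.
  by rewrite sum_nat_const card_ord in H.
have A1 : n * n <= 32 * ((n - L) * L).
  have HL1 : L * 8 <= n by apply: leq_divM.
  have HL2 : n < L * 8 + 8.
    by rewrite {1}(divn_eq n 8) ltn_add2l; apply: ltn_pmod.
  have B1 : n <= 2 * (n - L) by move: HL1; move: L => l; lia.
  have B2 : n <= 16 * L by move: HL2; move: L => l; lia.
  apply: (leq_trans (leq_mul B1 B2)).
  move: (n - L) => d; apply: eq_leq; ring.
move: S3 A1; move: ((n - L) * L) => X S3 A1.
have Hn0 : 0 < n by apply: leq_trans Hn.
rewrite -(leq_pmul2r Hn0).
have -> : P * (n * m) * n = m * P * (n * n) by ring.
apply: (leq_trans (leq_mul (leqnn _) A1)).
have -> : m * P * (32 * X) = 32 * (m * (P * X)) by ring.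
apply: (leq_trans (leq_mul (leqnn 32) S3)).
have -> : 32 * (n * (2 * C)) = 64 * C * n by ring.
by [].
Qed.

End Count.


Local Open Scope ring_scope.

Lemma ler_sum_In (R : realType) (T : Type) (s : seq T) (F G : T -> R) :
  (forall p, List.In p s -> F p <= G p) ->
  \sum_(p <- s) F p <= \sum_(p <- s) G p.
Proof.
elim: s => [|p s IH] H; first by rewrite !big_nil.
rewrite !big_cons; apply: lerD; first by apply: H; left.
by apply: IH => q Hq; apply: H; right.
Qed.

Theorem theorem8 (R : realType) :
  exists c : R, 0 < c /\
  exists N : nat, forall n m : nat,
    (0 < n)%N -> (0 < m)%N -> ~~ odd m -> (N <= n)%N -> (N <= m)%N ->
    forall D : rdtree R (cell n m) (Sigma n m),
      zero_error D (@g n m) ->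
      exists x : input n m, c * (n * m)%:R <= expected_cost D x.
Proof.
exists (64%:R^-1); split; first by rewrite invr_gt0 ltr0n.
exists 64%N => n m Hn0 Hm0 Hodd HN HM D HD.
have Hn8 : (7 < n)%N by apply: leq_trans HN.
have Hm8 : (7 < m)%N by apply: leq_trans HM.
have Hn16 : (15 < n)%N by apply: leq_trans HN.
set K : R := (#|{ffun 'I_m -> 'I_n}| * (n * m))%:R.
have Hsum : K / 64%:R <= \sum_(z : {ffun 'I_m -> 'I_n}) expected_cost D (xz z).
  rewrite /expected_cost exchange_big /=.
  have -> : K / 64%:R = \sum_(p <- rdt_supp D) p.1 * (K / 64%:R).
    by rewrite -mulr_suml rdt_sum1 mul1r.
  apply: ler_sum_In => p Hp.
  rewrite -mulr_sumr.
  have H0 := rdt_nonneg Hp.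
  case: (eqVneq p.1 0) => [->|Hne]; first by rewrite !mul0r.
  have Hpos : 0 < p.1 by rewrite lt0r Hne H0.
  apply: ler_wpM2l => //.
  have Ht := HD p Hp Hpos.
  have TB := tree_bound Ht Hn8 Hm8 Hn16.
  rewrite ler_pdivrMr ?ltr0n //.
  under eq_bigr => z _ do rewrite cost_qs.
  by rewrite -natr_sum -natrM ler_nat [(_ * 64)%N]mulnC.
case: (boolP [exists z : {ffun 'I_m -> 'I_n},
               64%:R^-1 * (n * m)%:R <= expected_cost D (xz z)]).
  by move=> /existsP [z Hz]; exists (xz z).
move=> /existsPn Hall; exfalso.
have z0 : {ffun 'I_m -> 'I_n} by exact: [ffun => Ordinal Hn0].
have Hlt : \sum_(z : {ffun 'I_m -> 'I_n}) expected_cost D (xz z) <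
           \sum_(z : {ffun 'I_m -> 'I_n}) 64%:R^-1 * (n * m)%:R.
  apply: ltr_sum; first by apply/hasP; exists z0; rewrite ?mem_index_enum.
  by move=> z _; rewrite ltNge; apply: Hall.
rewrite sumr_const -mulr_natl in Hlt.
have : K / 64%:R < K / 64%:R.
  apply: (le_lt_trans Hsum); apply: (lt_le_trans Hlt).
  have -> : #|(xpredT : pred {ffun 'I_m -> 'I_n})| = #|{ffun 'I_m -> 'I_n}| by apply: eq_card.
  rewrite /K -mulr_natr !natrM le_eqVlt; apply/orP; left; apply/eqP.
  rewrite -[_ *+ #|{ffun 'I_m -> 'I_n}|]mulr_natr.
  set a := (n%:R * m%:R : R); set b := (#|{ffun 'I_m -> 'I_n}|%:R : R).
  by rewrite !(mul1r, mulr1) -mulrA [RHS]mulrC [b * a]mulrC.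
by rewrite ltxx.
Qed.
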